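(* For every $n\ge1$ there exists a surjective open polyhedral map $(0,1)^n\to[0,1]^n$.
   Context: A polyhedron is a finite union of convex hulls of finite subsets of some $\mathbb R^d$; an open subpolyhedron of a polyhedron $P$ is $P\setminus R$ with $R\subseteq P$ a polyhedron, and $\mathrm{Sub}_o P$ denotes the set of these. The cube $[0,1]^n$ is equipped with the basis $\mathrm{Sub}_o[0,1]^n$, and $(0,1)^n$ (an open subpolyhedron of $[0,1]^n$) is equipped with the basis $\mathrm{Sub}_o(0,1)^n:=\{O\cap(0,1)^n: O\in\mathrm{Sub}_o[0,1]^n\}$. A map $g\colon(0,1)^n\to[0,1]^n$ is polyhedral if $g^{-1}[O]\in\mathrm{Sub}_o(0,1)^n$ for every $O\in\mathrm{Sub}_o[0,1]^n$, and open if $g[U]\in\mathrm{Sub}_o[0,1]^n$ for every $U\in\mathrm{Sub}_o(0,1)^n$. *)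

(* Defs.v *)
From HB Require Import structures.
From mathcomp Require Import all_boot all_order all_algebra.
From mathcomp Require Import all_classical reals.
Set Implicit Arguments. Unset Strict Implicit. Unset Printing Implicit Defensive.
Import Order.TTheory GRing.Theory Num.Theory.
Local Open Scope ring_scope.
Local Open Scope classical_set_scope.

Section Polyhedra.
Variables (R : realType) (n : nat).

Definition Rpoint := 'I_n -> R.

Definition conv_hull (k : nat) (S : 'I_k -> Rpoint) : set Rpoint :=
  [set x | exists w : 'I_k -> R,
     (forall i, 0 <= w i) /\ \sum_(i < k) w i = 1 /\
     forall j, x j = \sum_(i < k) w i * S i j].

Definition polyhedron (P : set Rpoint) : Prop :=
  exists (m : nat) (sz : 'I_m -> nat) (S : forall t : 'I_m, 'I_(sz t) -> Rpoint),
    P = [set x | exists t : 'I_m, conv_hull (S t) x].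

Definition cube : set Rpoint := [set x | forall i, 0 <= x i <= 1].
Definition ocube : set Rpoint := [set x | forall i, 0 < x i < 1].

Definition SubO_cube (O : set Rpoint) : Prop :=
  exists Q : set Rpoint, polyhedron Q /\ Q `<=` cube /\ O = cube `\` Q.

Definition SubO_ocube (U : set Rpoint) : Prop :=
  exists O : set Rpoint, SubO_cube O /\ U = O `&` ocube.

(* a map g : (0,1)^n -> [0,1]^n is represented by g : Rpoint -> Rpoint
   with g @` ocube `<=` cube; values outside ocube are irrelevant *)
Definition polyhedral_map (g : Rpoint -> Rpoint) : Prop :=
  forall O, SubO_cube O -> SubO_ocube (ocube `&` g @^-1` O).

Definition open_map (g : Rpoint -> Rpoint) : Prop :=
  forall U, SubO_ocube U -> SubO_cube (g @` U).

End Polyhedra.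

(* Main.v *)
Require Import Defs.
From HB Require Import structures.
From mathcomp Require Import all_boot all_order all_algebra.
From mathcomp Require Import all_classical reals.
From mathcomp Require Import ring lra.
Set Implicit Arguments. Unset Strict Implicit. Unset Printing Implicit Defensive.
Import Order.TTheory GRing.Theory Num.Theory.
Local Open Scope ring_scope.
Local Open Scope classical_set_scope.
Section Hull.
Variables (R : realFieldType).

Definition hull (V : lmodType R) (I : finType) (S : I -> V) : set V :=
  [set x | exists w : I -> R, (forall i, 0 <= w i) /\ \sum_i w i = 1 /\
     x = \sum_i w i *: S i].

Definition lin (U W : lmodType R) (f : U -> W) :=
  forall a u v, f (a *: u + v) = a *: f u + f v.

Definition aff (U W : lmodType R) (f : U -> W) :=
  forall (I : finType) (w : I -> R) (S : I -> U), \sum_i w i = 1 ->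
    f (\sum_i w i *: S i) = \sum_i w i *: f (S i).

Variables (V W : lmodType R).

Lemma lin_sum (f : V -> W) (I : finType) (F : I -> V) :
  lin f -> f (\sum_i F i) = \sum_i f (F i).
Proof.
move=> hf.
have f0 : f 0 = 0.
  have := hf 1 0 0; rewrite !scale1r addr0 => h.
  by apply: (addrI (f 0)); rewrite addr0 -h.
elim/big_rec2: _ => // i y1 y2 _ <-.
by have := hf 1 (F i) y2; rewrite !scale1r.
Qed.

Lemma lin_scale (f : V -> W) a u : lin f -> f (a *: u) = a *: f u.
Proof.
move=> hf.
have f0 : f 0 = 0.
  have := hf 1 0 0; rewrite !scale1r addr0 => h.
  by apply: (addrI (f 0)); rewrite addr0 -h.
by have := hf a u 0; rewrite !addr0 f0 addr0.
Qed.

Lemma lin_aff (f : V -> W) : lin f -> aff f.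
Proof.
move=> hf I w S _; rewrite lin_sum //; apply: eq_bigr => i _.
exact: lin_scale.
Qed.

Lemma hull_image (f : V -> W) (I : finType) (S : I -> V) :
  aff f -> f @` hull S = hull (f \o S).
Proof.
move=> hf; apply/seteqP; split => x.
  move=> [y [w [w0 [w1 ->]]] <-]; exists w; split => //; split => //.
  exact: hf.
move=> [w [w0 [w1 ->]]]; exists (\sum_i w i *: S i); last exact: hf.
by exists w.
Qed.

Lemma hull_pt (I : finType) (S : I -> V) i : hull S (S i).
Proof.
exists (fun k => if k == i then 1 else 0); split.
  by move=> k; case: ifP.
split; first by rewrite (bigD1 i) //= eqxx big1 ?addr0 // => k /negbTE ->.
by rewrite (bigD1 i) //= eqxx scale1r big1 ?addr0 // => k /negbTE ->; rewrite scale0r.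
Qed.

Lemma hull_convex (I : finType) (S : I -> V) x y a : hull S x -> hull S y ->
  0 <= a <= 1 -> hull S (a *: x + (1 - a) *: y).
Proof.
move=> [w [w0 [w1 ->]]] [v [v0 [v1 ->]]] /andP[a0 a1].
exists (fun i => a * w i + (1 - a) * v i); split.
  move=> i; apply: addr_ge0; apply: mulr_ge0 => //; rewrite subr_ge0 //.
split; first by rewrite big_split /= -!mulr_sumr w1 v1 !mulr1 addrC subrK.
rewrite !scaler_sumr -big_split /=; apply: eq_bigr => i _.
by rewrite !scalerA -scalerDl.
Qed.

Lemma hull_sub (I J : finType) (S : I -> V) (T : J -> V) :
  (forall j, hull S (T j)) -> hull T `<=` hull S.
Proof.
move=> /choice [u hu] x [v [v0 [v1 ->]]].
exists (fun i => \sum_j v j * u j i); split.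
  move=> i; apply: sumr_ge0 => j _; apply: mulr_ge0 => //.
  by case: (hu j) => + _; apply.
split.
  rewrite exchange_big /= -[RHS]v1; apply: eq_bigr => j _.
  by rewrite -mulr_sumr; case: (hu j) => _ [-> _]; rewrite mulr1.
have -> : \sum_j v j *: T j = \sum_j \sum_i (v j * u j i) *: S i.
  apply: eq_bigr => j _; case: (hu j) => _ [_ ->].
  by rewrite scaler_sumr; apply: eq_bigr => i _; rewrite scalerA.
rewrite exchange_big /=; apply: eq_bigr => i _.
by rewrite scaler_suml.
Qed.

End Hull.
Section Core.
Variables (R : realFieldType) (I : finType) (l w : I -> R) (i0 : I).
Let nn i := l i <= 0.
Let a i j := l j / (l j - l i).
Let A := \sum_(i | nn i) w i * - l i.
Let B := \sum_(j | ~~ nn j) w j * l j.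
Definition TT (U : lmodType R) (Y : I -> U) i j :=
  if nn i then (if nn j then Y i else a i j *: Y i + (1 - a i j) *: Y j) else Y i0.
Definition vv i j :=
  if nn i then (if nn j then (if j == i then (1 - B / A) * w i else 0)
                else w i * w j * (l j - l i) / A) else 0.

Lemma core (U : lmodType R) (Y : I -> U) : A != 0 ->
  \sum_i \sum_j vv i j *: TT Y i j = \sum_i w i *: Y i.
Proof.
move=> A0.
pose XP := \sum_(j | ~~ nn j) w j *: Y j.
have inner : forall i, nn i ->
   \sum_j vv i j *: TT Y i j = w i *: Y i - (w i * l i / A) *: XP.
  move=> i ni.
  rewrite (bigID nn) /=.
  rewrite (bigD1 i) //= big1 ?addr0; last first.
    by move=> j /andP[nj /negbTE ji]; rewrite /vv /TT ni nj ji scale0r.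
  rewrite /vv /TT ni eqxx.
  have -> : \sum_(j | ~~ nn j)
      (if nn j then (if j == i then (1 - B / A) * w i else 0)
       else w i * w j * (l j - l i) / A) *:
      (if nn j then Y i else a i j *: Y i + (1 - a i j) *: Y j) =
      \sum_(j | ~~ nn j) ((w i * (w j * l j) / A) *: Y i
         - (w i * l i / A) *: (w j *: Y j)).
    apply: eq_bigr => j /negbTE nj; rewrite nj.
    have lij : l j - l i != 0.
      move: nj ni; rewrite /nn => /negbT; rewrite -ltNge => h1 h2.
      by rewrite subr_eq0 gt_eqF // (le_lt_trans h2 h1).
    rewrite scalerDr !scalerA -scaleNr /a.
    by congr (_ *: _ + _ *: _); field; rewrite ?A0 ?lij.
  rewrite sumrB -scaler_suml -scaler_sumr -mulr_suml -mulr_sumr -/B.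
  rewrite addrA -scalerDl; congr (_ *: _ - _); field; by rewrite A0.
rewrite (bigID nn) /= [X in _ + X]big1 ?addr0; last first.
  move=> i /negbTE ni; apply: big1 => j _; by rewrite /vv ni scale0r.
rewrite (eq_bigr _ inner) sumrB -scaler_suml -mulr_suml.
have -> : \sum_(i | nn i) w i * l i = - A.
  by rewrite /A -sumrN; apply: eq_bigr => i _; rewrite mulrN opprK.
rewrite mulNr divff // scaleN1r opprK [RHS](bigID nn) /=.
by [].
Qed.

End Core.
Section Clip.
Variables (R : realFieldType) (V : lmodType R).

Lemma lin_sumw (L : V -> R^o) (I : finType) (w : I -> R) (S : I -> V) :
  lin L -> L (\sum_i w i *: S i) = \sum_i w i * L (S i).
Proof. by move=> hL; rewrite lin_sum //; apply: eq_bigr => i _; rewrite lin_scale. Qed.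

Lemma sum_eq_if (U : zmodType) (I : finType) (F : I -> U) i :
  \sum_j (if j == i then F j else 0) = F i.
Proof. by rewrite (bigD1 i) //= eqxx big1 ?addr0 // => j /negbTE ->. Qed.

Lemma clip (I : finType) (S : I -> V) (L : V -> R^o) : lin L ->
  exists (J : finType) (T : J -> V), hull S `&` [set x | L x <= 0] = hull T.
Proof.
move=> hL.
pose l i := L (S i).
case: (pselect (exists i0, l i0 <= 0)) => [[i0 hi0]|none]; last first.
  exists 'I_0, (fun _ => 0); apply/seteqP; split => x.
    move=> [[w [w0 [w1 ->]]] /=]; rewrite lin_sumw // => hx.
    have hl : forall i, 0 < l i by move=> i; rewrite ltNge; apply/negP => h; apply: none; exists i.
    have t0 : forall i, 0 <= w i * L (S i) by move=> i; rewrite mulr_ge0 // ltW // hl.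
    have s0 : \sum_i w i * L (S i) = 0 by apply/eqP; rewrite eq_le hx sumr_ge0.
    have := psumr_eq0P (fun i _ => t0 i) s0 => hw.
    have : \sum_i w i = 0.
      apply: big1 => i _; have /eqP := hw i isT.
      by rewrite mulf_eq0 (gt_eqF (hl i)) orbF => /eqP.
    by rewrite w1 => /eqP; rewrite oner_eq0.
  by move=> [w [_ [+ _]]]; rewrite big_ord0 => /eqP; rewrite eq_sym oner_eq0.
have lij_pos : forall i j, l i <= 0 -> ~~ (l j <= 0) -> 0 < l j - l i.
  by move=> i j h1; rewrite -ltNge => h2; rewrite subr_gt0 (le_lt_trans h1 h2).
exists (I * I)%type, (fun p => TT l i0 S p.1 p.2); apply/seteqP; split => x.
- move=> [[w [w0 [w1 ->]]] /= hx].
  rewrite lin_sumw // in hx.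
  set A := \sum_(i | l i <= 0) w i * - l i.
  set B := \sum_(j | ~~ (l j <= 0)) w j * l j.
  have A0 : 0 <= A by apply: sumr_ge0 => i hi; rewrite mulr_ge0 // oppr_ge0.
  have B0 : 0 <= B.
    by apply: sumr_ge0 => i; rewrite -ltNge => hi; rewrite mulr_ge0 // ltW.
  have BA : B <= A.
    move: hx; rewrite (bigID (fun i => l i <= 0)) /= -/B.
    have -> : \sum_(i | l i <= 0) w i * L (S i) = - A.
      by rewrite /A -sumrN; apply: eq_bigr => i _; rewrite mulrN opprK.
    by rewrite addrC subr_le0.
  have [Az|Anz] := eqVneq A 0.
    have Bz : B = 0 by apply/eqP; rewrite eq_le B0 andbT -Az.
    have wz : forall j, ~~ (l j <= 0) -> w j = 0.
      move=> j hj.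
      have hF : forall k, ~~ (l k <= 0) -> 0 <= w k * l k.
        by move=> k hk; rewrite mulr_ge0 // ltW // ltNge.
      have := psumr_eq0P hF Bz hj.
      move=> /eqP; rewrite mulf_eq0 => /orP[/eqP //|]; move: hj.
      by rewrite -ltNge => /gt_eqF ->.
    exists (fun p => if p.2 == p.1 then w p.1 else 0); split.
      by move=> [i j] /=; case: ifP.
    split.
      rewrite -(pair_bigA _ (fun i j => if j == i then w i else 0)) /= -w1.
      by apply: eq_bigr => i _; rewrite sum_eq_if.
    rewrite -(pair_bigA _ (fun i j => (if j == i then w i else 0) *: TT l i0 S i j)) /=.
    apply: eq_bigr => i _.
    rewrite (eq_bigr (fun j => if j == i then w i *: TT l i0 S i j else 0)).
      rewrite sum_eq_if /TT; case: ifP => [->//|/negbT hi].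
      by rewrite wz // !scale0r.
    by move=> j _; case: ifP => //; rewrite scale0r.
  exists (fun p => vv l w p.1 p.2); split.
    move=> [i j] /=; rewrite /vv; case: ifP => hi //; case: ifP => hj.
        case: ifP => // _; apply: mulr_ge0 => //.
        by rewrite subr_ge0 ler_pdivrMr ?mul1r // lt_neqAle eq_sym Anz A0.
      apply: divr_ge0 => //; apply: mulr_ge0; first exact: mulr_ge0.
      by apply: ltW; apply: lij_pos => //; rewrite hj.
  split.
    have h1 := @core _ _ l w i0 _ (fun _ => (1 : R^o)) Anz.
    rewrite -(pair_bigA _ (fun i j => vv l w i j)) /= -w1.
    rewrite -[RHS](_ : \sum_i w i *: (1 : R^o) = \sum_i w i); last first.
      by apply: eq_bigr => i _; rewrite /GRing.scale /= mulr1.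
    rewrite -h1; apply: eq_bigr => i _; apply: eq_bigr => j _.
    rewrite /TT; case: ifP => _; [case: ifP => _|];
      rewrite /GRing.scale /= ?mulr1 //.
    by rewrite addrC subrK mulr1.
  by have := @core _ _ l w i0 _ S Anz; rewrite pair_bigA /= => <-.
- move=> hx; split.
    apply: (hull_sub _ hx) => -[i j] /=; rewrite /TT.
    case: ifP => hi; last exact: hull_pt.
    case: ifP => hj; first exact: hull_pt.
    apply: hull_convex; try exact: hull_pt.
    have hp := lij_pos i j hi (negbT hj).
    have hj' : 0 < l j by rewrite ltNge hj.
    apply/andP; split; first by apply: divr_ge0; apply: ltW.
    by rewrite ler_pdivrMr // mul1r lerDl oppr_ge0.
  move: hx => [v [v0 [_ hxv]]]; rewrite /= hxv lin_sumw //.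
  apply: sumr_le0 => -[i j] _ /=; rewrite /TT.
  apply: mulr_ge0_le0 => //.
  case: ifP => hi; last exact: hi0.
  case: ifP => hj; first exact: hi.
  have hp := lij_pos i j hi (negbT hj).
  rewrite hL (lin_scale _ _ hL) le_eqVlt; apply/orP; left; apply/eqP.
  rewrite /GRing.scale /= -/(l i) -/(l j).
  by field; rewrite gt_eqF.
Qed.

End Clip.
Section Inter.
Variables (R : realFieldType) (W : lmodType R).

Lemma clip_seq (K : eqType) (Ls : K -> W -> R^o) (hl : forall k, lin (Ls k))
  (s : seq K) (I : finType) (S : I -> W) :
  exists (J : finType) (T : J -> W),
    hull S `&` [set z | forall k, k \in s -> Ls k z <= 0] = hull T.
Proof.
elim: s I S => [|k s IH] I S.
  exists I, S; apply/seteqP; split => x; first by case.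
  by move=> hx; split.
have [J1 [T1 h1]] := clip S (hl k).
have [J2 [T2 h2]] := IH J1 T1.
exists J2, T2; rewrite -h2 -h1; apply/seteqP; split => x.
  move=> [hx hk]; split; first split => //.
    by apply: hk; rewrite inE eqxx.
  by move=> k' ks; apply: hk; rewrite inE ks orbT.
move=> [[hx hkx] hs]; split => // k'; rewrite inE => /orP[/eqP -> //|].
exact: hs.
Qed.

Lemma pair_eq (U1 U2 : Type) (a b : U1 * U2) : a.1 = b.1 -> a.2 = b.2 -> a = b.
Proof. by case: a b => ? ? [? ?] /= -> ->. Qed.

End Inter.

Section Inter2.
Variables (R : realFieldType) (V : lmodType R) (D : finType) (phi : D -> V -> R^o).
Hypothesis phil : forall d, lin (phi d).
Hypothesis phisep : forall x y, (forall d, phi d x = phi d y) -> x = y.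

Lemma fst_lin : lin (fun z : V * V => z.1). Proof. by []. Qed.
Lemma snd_lin : lin (fun z : V * V => z.2). Proof. by []. Qed.

Lemma hull_inter (I J : finType) (S : I -> V) (T : J -> V) :
  exists (K : finType) (U : K -> V), hull S `&` hull T = hull U.
Proof.
pose ST := fun p : I * J => (S p.1, T p.2).
pose Ls := fun (k : D * bool) (z : V * V) =>
  (if k.2 then phi k.1 z.1 - phi k.1 z.2 else phi k.1 z.2 - phi k.1 z.1 : R^o).
have hl : forall k, lin (Ls k).
  move=> [d b] a u v; rewrite /Ls /=; case: b => /=; rewrite !phil;
    rewrite /GRing.scale /=; ring.
have [K [U hU]] := clip_seq hl (enum {: D * bool}) ST.
exists K, (fun k => (U k).1).
rewrite -(hull_image (W := V) _ (lin_aff fst_lin)) -hU.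
apply/seteqP; split => x.
  move=> [[w [w0 [w1 xw]]] [v [v0 [v1 xv]]]].
  exists (x, x) => //; split.
    exists (fun p => w p.1 * v p.2); split.
      by move=> p; rewrite mulr_ge0.
    split.
      rewrite -(pair_bigA _ (fun i j => w i * v j)) /= -[RHS]w1.
      by apply: eq_bigr => i _; rewrite -mulr_sumr v1 mulr1.
    apply: pair_eq.
      rewrite (lin_sum _ fst_lin) /= xw.
      rewrite -(pair_bigA _ (fun i j => (w i * v j) *: S i)) /=.
      apply: eq_bigr => i _; rewrite -scaler_suml -mulr_sumr v1 mulr1 //.
    rewrite (lin_sum _ snd_lin) /= xv.
    rewrite -(pair_bigA _ (fun i j => (w i * v j) *: T j)) /= exchange_big /=.
    apply: eq_bigr => j _; rewrite -scaler_suml -mulr_suml w1 mul1r //.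
  by move=> k _; case: k => d [] ; rewrite /Ls /= subrr.
move=> [z [hz hd] <-].
have z12 : z.1 = z.2.
  apply: phisep => d; apply/eqP; rewrite eq_le.
  have := hd (d, true); have := hd (d, false).
  rewrite /Ls /= !mem_enum !subr_le0 => h1 h2.
  by rewrite h1 ?h2.
split.
  have : ((fun z : V * V => z.1) @` hull ST) z.1 by exists z.
  rewrite (hull_image _ (lin_aff fst_lin)); apply: hull_sub => p.
  exact: hull_pt.
rewrite z12.
have : ((fun z : V * V => z.2) @` hull ST) z.2 by exists z.
rewrite (hull_image _ (lin_aff snd_lin)); apply: hull_sub => p.
exact: hull_pt.
Qed.

End Inter2.
Definition gpoly (R : realFieldType) (V : lmodType R) (P : set V) :=
  exists (K : finType) (F : K -> {I : finType & I -> V}),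
  P = [set x | exists k, hull (projT2 (F k)) x].

Section GPoly.
Variables (R : realFieldType) (V : lmodType R).

Lemma gpoly_hull (I : finType) (S : I -> V) : gpoly (hull S).
Proof.
exists unit, (fun _ => existT _ I S); apply/seteqP; split => x.
  by move=> hx; exists tt.
by move=> [].
Qed.

Lemma gpoly_bigU (A : finType) (P : A -> set V) :
  (forall a, gpoly (P a)) -> gpoly [set x | exists a, P a x].
Proof.
move=> hp.
have : forall a, exists KF : {K : finType & K -> {I : finType & I -> V}},
    P a = [set x | exists k, hull (projT2 (projT2 KF k)) x].
  by move=> a; have [K [F ->]] := hp a; exists (existT _ K F).
move=> /choice [g hg].
exists {a : A & projT1 (g a)}, (fun p => projT2 (g (projT1 p)) (projT2 p)).
apply/seteqP; split => x.
  by move=> [a]; rewrite hg => -[k hk]; exists (existT _ a k).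
by move=> [[a k] /= hk]; exists a; rewrite hg; exists k.
Qed.

Lemma gpoly_U (P Q : set V) : gpoly P -> gpoly Q -> gpoly (P `|` Q).
Proof.
move=> hP hQ.
have := @gpoly_bigU bool (fun b => if b then P else Q) (fun b => if b as b0 return gpoly (if b0 then P else Q) then hP else hQ).
congr gpoly; apply/seteqP; split => x.
  by move=> [[]] h; [left|right].
by move=> [h|h]; [exists true|exists false].
Qed.

Lemma gpoly_image (W : lmodType R) (f : V -> W) (P : set V) :
  aff f -> gpoly P -> gpoly (f @` P).
Proof.
move=> hf [K [F ->]].
exists K, (fun k => existT _ (projT1 (F k)) (f \o projT2 (F k))).
apply/seteqP; split => x.
  move=> [y [k hk] <-]; exists k => /=.
  by rewrite -hull_image //; exists y.
move=> [k /=]; rewrite -hull_image // => -[y hy <-].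
by exists y => //; exists k.
Qed.

Lemma gpoly_bigI_gen (A : finType) (C : set V) (P : A -> set V)
  (hI : forall X Y : set V, gpoly X -> gpoly Y -> gpoly (X `&` Y)) :
  gpoly C -> (forall a, gpoly (P a)) ->
  gpoly (C `&` [set x | forall a, P a x]).
Proof.
move=> hC hP.
suff hs : forall s : seq A, gpoly (C `&` [set x | forall a, a \in s -> P a x]).
  have := hs (enum A); congr gpoly; apply/seteqP; split => x [h1 h2].
    by split => // a; apply: h2; rewrite mem_enum.
  by split => // a _; exact: h2.
elim => [|a s IH].
  congr gpoly: hC; apply/seteqP; split => x; first by move=> h; split.
  by case.
have := hI _ _ IH (hP a); congr gpoly; apply/seteqP; split => x.
  move=> [[h1 h2] h3]; split => // b; rewrite inE => /orP[/eqP -> //|].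
  exact: h2.
move=> [h1 h2]; split; first split => //.
  by move=> b bs; apply: h2; rewrite inE bs orbT.
by apply: h2; rewrite inE eqxx.
Qed.

End GPoly.

Section GPolyI.
Variables (R : realFieldType) (V : lmodType R) (D : finType) (phi : D -> V -> R^o).
Hypothesis phil : forall d, lin (phi d).
Hypothesis phisep : forall x y, (forall d, phi d x = phi d y) -> x = y.

Lemma gpoly_I (P Q : set V) : gpoly P -> gpoly Q -> gpoly (P `&` Q).
Proof.
move=> [K1 [F1 ->]] [K2 [F2 ->]].
have := @gpoly_bigU _ _ (K1 * K2)%type
  (fun p => hull (projT2 (F1 p.1)) `&` hull (projT2 (F2 p.2))).
have h : forall p : K1 * K2,
    gpoly (hull (projT2 (F1 p.1)) `&` hull (projT2 (F2 p.2))).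
  move=> p; have [K [U ->]] := hull_inter phil phisep (projT2 (F1 p.1)) (projT2 (F2 p.2)).
  exact: gpoly_hull.
move=> /(_ h); congr gpoly; apply/seteqP; split => x.
  by move=> [[k1 k2] [h1 h2]]; split; [exists k1|exists k2].
by move=> [[k1 h1] [k2 h2]]; exists (k1, k2).
Qed.

End GPolyI.
Section Concrete.
Variables (R : realType) (n : nat).
Definition Vn : lmodType R := ('I_n -> R^o).

Lemma sum_apply (I : finType) (F : I -> Vn) j :
  (\sum_i F i) j = \sum_i (F i j : R) :> R.
Proof. by elim/big_rec2: _ => // i y1 y2 _ <-. Qed.

Lemma conv_hullE (k : nat) (S : 'I_k -> Rpoint R n) :
  conv_hull S = hull (S : 'I_k -> Vn).
Proof.
apply/seteqP; split => x [w [w0 [w1 hx]]]; exists w; split => //; split => //.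
  apply: funext => j; rewrite hx sum_apply; apply: eq_bigr => i _ //.
by move=> j; rewrite hx sum_apply.
Qed.

Lemma hull_reindex (I : finType) (S : I -> Vn) :
  hull S = hull (fun t : 'I_#|I| => S (enum_val t)).
Proof.
apply/seteqP; split => x [w [w0 [w1 ->]]].
  exists (fun t => w (enum_val t)); split => //; split.
    by rewrite -w1 (big_enum_val (A := I)).
  by rewrite (big_enum_val (A := I)).
exists (fun i => w (enum_rank i)); split => //; split.
  by rewrite -w1 (big_enum_val (A := I)); apply: eq_bigr => t _; rewrite enum_valK.
by rewrite (big_enum_val (A := I)); apply: eq_bigr => t _; rewrite enum_valK.
Qed.

Lemma polyE (P : set (Rpoint R n)) : polyhedron P <-> gpoly (P : set Vn).
Proof.
split.
  move=> [m [sz [S ->]]].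
  exists 'I_m, (fun t => existT (fun I : finType => I -> Vn) _ (S t : 'I_(sz t) -> Vn)).
  by apply/seteqP; split => x [t ht]; exists t; move: ht; rewrite conv_hullE.
move=> [K [F ->]].
exists #|K|, (fun t => #|projT1 (F (enum_val t))|),
  (fun t i => projT2 (F (enum_val t)) (enum_val i)).
apply/seteqP; split => x.
  move=> [k hk]; exists (enum_rank k); rewrite conv_hullE enum_rankK.
  by rewrite -hull_reindex.
move=> [t]; rewrite conv_hullE => ht; exists (enum_val t).
by rewrite hull_reindex.
Qed.

Definition coord (j : 'I_n) (x : Vn) : R^o := x j.
Lemma coord_lin j : lin (coord j). Proof. by []. Qed.
Lemma coord_sep (x y : Vn) : (forall j, coord j x = coord j y) -> x = y.
Proof. by move=> h; apply: funext => j; exact: h. Qed.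

Lemma gpolyI (P Q : set Vn) : gpoly P -> gpoly Q -> gpoly (P `&` Q).
Proof. exact: (gpoly_I coord_lin coord_sep). Qed.

Lemma aff_coord (p q : 'I_n -> R) :
  aff (fun x : Vn => (fun i => p i * x i + q i) : Vn).
Proof.
move=> I w S w1; apply: funext => i.
rewrite !sum_apply mulr_sumr.
rewrite -[q i]mul1r -w1 mulr_suml -big_split /=; apply: eq_bigr => k _.
have e : forall (a : R) (f : Vn), (a *: f) i = a * f i by [].
by rewrite !e; ring.
Qed.

End Concrete.
Section Zig.
Variables (R : realType) (n : nat).
Local Notation Vn := (Vn R n).

Definition k0 : 'I_3 := @Ordinal 3 0 isT.
Definition k1 : 'I_3 := @Ordinal 3 1 isT.
Definition k2 : 'I_3 := @Ordinal 3 2 isT.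

Definition cc (k : 'I_3) : R := if val k == 1%N then -3 else 3.
Definition dd (k : 'I_3) : R :=
  if val k == 0%N then 0 else if val k == 1%N then 2 else -2.
Definition piece (t : R) : 'I_3 :=
  if t <= 3^-1 then k0 else if t <= 2 / 3 then k1 else k2.
Definition hz (t : R) : R := cc (piece t) * t + dd (piece t).

Definition Am (a : {ffun 'I_n -> 'I_3}) (x : Vn) : Vn :=
  fun i => cc (a i) * x i + dd (a i).
Definition Bm (a : {ffun 'I_n -> 'I_3}) (y : Vn) : Vn :=
  fun i => (cc (a i))^-1 * y i + (- dd (a i) / cc (a i)).
Definition gz (x : Vn) : Vn := fun i => hz (x i).

Lemma cc_neq0 k : cc k != 0.
Proof. by rewrite /cc; case: ifP => _; rewrite ?oppr_eq0 pnatr_eq0. Qed.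

Lemma AmB a y : Am a (Bm a y) = y.
Proof.
apply: funext => i; rewrite /Am /Bm; have := cc_neq0 (a i) => h.
by field.
Qed.

Lemma BmA a x : Bm a (Am a x) = x.
Proof.
apply: funext => i; rewrite /Am /Bm; have := cc_neq0 (a i) => h.
by field.
Qed.

Lemma gzA x : gz x = Am [ffun i => piece (x i)] x.
Proof. by apply: funext => i; rewrite /gz /Am ffunE. Qed.

Lemma hb (k : 'I_3) (y : R) : 0 <= y <= 1 ->
  hz ((cc k)^-1 * y + - dd k / cc k) = y /\
  0 <= (cc k)^-1 * y + - dd k / cc k <= 1.
Proof.
move=> /andP[y0 y1]; rewrite /hz /piece.
case: (lerP _ (3^-1)) => c1.
  by case: k c1 => [[|[|[|k]]] hk] //=; rewrite /cc /dd /= => c1;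
    split; try (apply/andP; split); lra.
case: (lerP _ (2/3)) => c2;
  by case: k c1 c2 => [[|[|[|k]]] hk] //=; rewrite /cc /dd /= => c1 c2;
    split; try (apply/andP; split); lra.
Qed.

Lemma hz_range t : 0 <= t <= 1 -> 0 <= hz t <= 1.
Proof.
move=> /andP[t0 t1]; rewrite /hz /piece.
case: (lerP _ (3^-1)) => c1; [|case: (lerP _ (2/3)) => c2];
  rewrite /cc /dd /=; apply/andP; split; lra.
Qed.

Lemma Bm_cube a y : (@cube R n) y -> (@cube R n) (Bm a y) /\ gz (Bm a y) = y.
Proof.
move=> hy; split.
  by move=> i; rewrite /Bm; have [_ ->] := hb (a i) (hy i).
by apply: funext => i; rewrite /gz /Bm; have [-> _] := hb (a i) (hy i).
Qed.

Lemma gz_cube x : (@cube R n) x -> (@cube R n) (gz x).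
Proof. by move=> hx i; apply: hz_range. Qed.

Definition corner (c : {ffun 'I_n -> bool}) : Vn := fun i => if c i then 1 else 0.

Lemma cube_hull : ((@cube R n) : set Vn) = hull corner.
Proof.
apply/seteqP; split => x.
  move=> hx.
  pose F := fun (i : 'I_n) (b : bool) => (if b then x i else 1 - x i : R).
  exists (fun c : {ffun 'I_n -> bool} => \prod_i F i (c i)); split.
    move=> c; apply: prodr_ge0 => i _; rewrite /F; case: (c i);
      have := hx i; move=> /andP[? ?]; lra.
  split.
    rewrite -bigA_distr_bigA /= big1 // => i _.
    by rewrite big_bool /F /= addrC subrK.
  apply: funext => j; rewrite sum_apply.
  pose G := fun (i : 'I_n) (b : bool) =>
    F i b * (if i == j then (if b then 1 else 0) else 1).
  have key : \sum_(c : {ffun 'I_n -> bool}) \prod_i G i (c i) = x j :> R.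
    rewrite -bigA_distr_bigA /= (bigD1 j) //=.
    have e2 : \prod_(i < n | i != j) \sum_b G i b = 1.
      apply: big1 => i /negbTE ij; rewrite big_bool /G /F /= ij !mulr1.
      by rewrite addrC subrK.
    rewrite e2 mulr1.
    by rewrite big_bool /G /F /= eqxx mulr0 mulr1 addr0.
  rewrite -key; apply: eq_bigr => c _.
  have e3 : \prod_i (if i == j then (if c i then 1 else 0) else 1) =
      (if c j then 1 else 0) :> R.
    rewrite (bigD1 j) //= eqxx.
    have e1 : \prod_(i < n | i != j)
      (if i == j then (if c i then 1 else 0) else 1) = 1 :> R.
      by apply: big1 => i /negbTE ->.
    by rewrite e1 mulr1.
  by rewrite /G big_split /= e3 /corner.
move=> [w [w0 [w1 ->]]] j; rewrite sum_apply.
apply/andP; split.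
  apply: sumr_ge0 => c _; change (0 <= w c * corner c j).
  by rewrite /corner; case: (c j); rewrite ?mulr1 ?mulr0.
rewrite -w1; apply: ler_sum => c _; change (w c * corner c j <= w c).
by rewrite /corner; case: (c j); rewrite ?mulr1 ?mulr0.
Qed.

Lemma cube_gpoly : gpoly ((@cube R n) : set Vn).
Proof. rewrite cube_hull; exact: gpoly_hull. Qed.

Definition face (i : 'I_n) (e : R) (x : Vn) : Vn :=
  fun j => (if j == i then 0 else 1) * x j + (if j == i then e else 0).

Lemma bnd_gpoly : gpoly ((@cube R n) `\` (@ocube R n) : set Vn).
Proof.
have := @gpoly_bigU _ _ ('I_n * bool)%type
  (fun p => face p.1 (if p.2 then 1 else 0) @` ((@cube R n) : set Vn)).
have h : forall p : 'I_n * bool,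
    gpoly (face p.1 (if p.2 then 1 else 0) @` ((@cube R n) : set Vn)).
  move=> p; apply: gpoly_image; last exact: cube_gpoly.
  exact: aff_coord.
move=> /(_ h); congr gpoly; apply/seteqP; split => x.
  move=> [[i e] [y hy <-]] /=; split.
    move=> j; rewrite /face; case: ifP => _; rewrite ?mul0r ?add0r ?mul1r ?addr0 //.
    by case: e; rewrite ?ler01 ?lexx.
  move=> ho; have := ho i; rewrite /face eqxx mul0r add0r; clear ho; case: e; lra.
move=> [hx ho].
have : exists i, ~ (0 < x i < 1).
  apply/not_existsP => hn; apply: ho => i; have := hn i.
  by move/contrapT.
move=> [i hi]; have := hx i => /andP[x0 x1].
have [e he] : exists e : bool, x i = if e then 1 else 0.
  case: (eqVneq (x i) 0) => [->|h0]; first by exists false.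
  case: (eqVneq (x i) 1) => [->|h1]; first by exists true.
  exfalso; apply: hi; apply/andP; split; rewrite lt_neqAle ?h1 ?x1 //.
  by rewrite eq_sym h0.
exists (i, e) => //; exists x => //.
apply: funext => j; rewrite /face; case: eqVneq => [->|_].
  by rewrite mul0r add0r he.
by rewrite mul1r addr0.
Qed.

End Zig.
Lemma oc_c (R : realType) (n : nat) (x : Rpoint R n) : ocube x -> cube x.
Proof. by move=> h i; have /andP[? ?] := h i; apply/andP; split; apply: ltW. Qed.

Theorem lemma5p7 (R : realType) (n : nat) (hn : (0 < n)%N) :
  exists g : Rpoint R n -> Rpoint R n,
    g @` @ocube R n = @cube R n /\
    polyhedral_map g /\ open_map g.
Proof.
exists (@gz R n).
split.
  apply/seteqP; split => y.
    by move=> [x hx <-]; apply: gz_cube; apply: oc_c.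
  move=> hy; exists (Bm [ffun => k1] y); last by have [_ ->] := Bm_cube [ffun => k1] hy.
  move=> i; rewrite /Bm ffunE /cc /dd /=; have /andP[? ?] := hy i.
  by apply/andP; split; lra.
split.
- move=> O [Q [hQ [Qc ->]]].
  pose Q' := [set x : Vn R n | exists a, (Bm a @` (Q : set (Vn R n))) x].
  exists (@cube R n `\` Q'); split.
    exists Q'; split.
      apply/polyE; apply: gpoly_bigU => a; apply: gpoly_image; first exact: aff_coord.
      by apply/polyE.
    split => //.
    by move=> x [a [q hq <-]]; exact: (Bm_cube a (Qc _ hq)).1.
  apply/seteqP; split => x.
    move=> [ho [hgc hgQ]]; split => //; split; first exact: oc_c.
    move=> [a [q hq eq]]; apply: hgQ; rewrite -eq.
    by have [_ ->] := Bm_cube a (Qc _ hq).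
  move=> [[hc hQ'] ho]; split => //; split; first exact: gz_cube.
  move=> hq; apply: hQ'; exists [ffun i => piece (x i)]; exists (gz x) => //.
  by rewrite gzA BmA.
- move=> U [O [[Q [hQ [Qc ->]]] ->]].
  pose Q'' := @cube R n `&`
    [set y | forall a, (Am a @` ((@cube R n `\` @ocube R n) `|` Q : set (Vn R n))) y].
  exists Q''; split.
    apply/polyE; apply: gpoly_bigI_gen.
    - exact: gpolyI.
    - exact: cube_gpoly.
    - move=> a; apply: gpoly_image; first exact: aff_coord.
      apply: gpoly_U; [exact: bnd_gpoly | exact/polyE].
  split; first by move=> y [].
  apply/seteqP; split => y.
    move=> [x [[hxc hxQ] hxo] <-]; split; first exact: gz_cube.
    move=> [_ hall]; have := hall [ffun i => piece (x i)].
    move=> [z hz]; rewrite gzA => /(congr1 (Bm [ffun i => piece (x i)])).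
    rewrite !BmA => zx; subst z.
    by case: hz => [[_ hno]|hq]; [exact: hno | exact: hxQ].
  move=> [hc hnot].
  have : ~ (forall a, (Am a @` ((@cube R n `\` @ocube R n) `|` Q : set (Vn R n))) y).
    by move=> h; apply: hnot; split.
  move=> /existsNP [a ha].
  have [hbc hgb] := Bm_cube a hc.
  exists (Bm a y); last exact: hgb.
  case: (pselect (ocube (Bm a y))) => [hno|hno]; last first.
    by exfalso; apply: ha; exists (Bm a y); [left; split | rewrite AmB].
  split => //; split => //.
  by move=> hq; apply: ha; exists (Bm a y); [right | rewrite AmB].
Qed.
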